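(* Let $(\mathfrak{g},[\cdot,\ldots,\cdot],\varepsilon)$ be an $n$-Lie color algebra, $(M,\rho)$ a representation of it, $\alpha:\mathfrak{g}\to\mathfrak{g}$ an algebra morphism (of degree zero, with $\alpha([x_1,\ldots,x_n])=[\alpha(x_1),\ldots,\alpha(x_n)]$) and $\mu:M\to M$ a linear map of degree zero such that $\rho(\tilde\alpha(X))\circ\mu=\mu\circ\rho(X)$ for all $X\in\bigwedge^{n-1}\mathfrak{g}$. Then $(M,\mu\circ\rho,\mu)$ is a representation of the multiplicative $n$-Hom-Lie color algebra $(\mathfrak{g},[\cdot,\ldots,\cdot]_\alpha,\varepsilon,\alpha)$, where $[\cdot,\ldots,\cdot]_\alpha=\alpha\circ[\cdot,\ldots,\cdot]$.
   Context: $\mathbb{K}$ is a field of characteristic zero and $\Gamma$ an abelian group. A bicharacter is a map $\varepsilon:\Gamma\times\Gamma\to\mathbb{K}\setminus\{0\}$ with $\varepsilon(a,b)\varepsilon(b,a)=1$, $\varepsilon(a,b+c)=\varepsilon(a,b)\varepsilon(a,c)$, $\varepsilon(a+b,c)=\varepsilon(a,c)\varepsilon(b,c)$. For homogeneous $x,y$, $\varepsilon(x,y)=\varepsilon(|x|,|y|)$ and $\varepsilon(x,y_1+\dots+y_k)=\varepsilon(|x|,|y_1|+\dots+|y_k|)$ ($=1$ for an empty sum); for $X=(x_1,\ldots,x_{n-1})$, $\varepsilon(X,\cdot)$ uses the total degree. An $n$-Hom-Lie color algebra $(\mathfrak{g},[\cdot,\ldots,\cdot],\varepsilon,\alpha)$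 is a $\Gamma$-graded vector space with an $n$-linear bracket of degree zero, a bicharacter $\varepsilon$ and a degree-zero linear map $\alpha$ such that for homogeneous elements: (i) $[x_1,\ldots,x_i,x_{i+1},\ldots,x_n]=-\varepsilon(x_i,x_{i+1})[x_1,\ldots,x_{i+1},x_i,\ldots,x_n]$; (ii) $[\alpha(x_1),\ldots,\alpha(x_{n-1}),[y_1,\ldots,y_n]]=\sum_{i=1}^n\varepsilon(x_1+\dots+x_{n-1},y_1+\dots+y_{i-1})[\alpha(y_1),\ldots,\alpha(y_{i-1}),[x_1,\ldots,x_{n-1},y_i],\alpha(y_{i+1}),\ldots,\alpha(y_n)]$; it is multiplicative if $\alpha$ commutes with the bracket; an $n$-Lie color algebra is the case $\alpha=\mathrm{id}$. $\bigwedge^{n-1}\mathfrak{g}$ is the $\varepsilon$-exterior power; $\tilde\alpha(x_1\wedge\dots\wedge x_{n-1})=\alpha(x_1)\wedge\dots\wedge\alpha(x_{n-1})$, $\mathrm{ad}_X(y)=[x_1,\ldots,x_{n-1},y]$. A representation $(M,\rho,\mu)$ of an $n$-Hom-Lie color algebra is a $\Gamma$-graded space $M$, an $\varepsilon$-skew-symmetric degree-zero linear map $\rho:\bigwedge^{n-1}\mathfrak{g}\to\mathrm{End}(M)$ and a degree-zero linear $\mu:M\to M$ such that for homogeneous $X=(x_1,\ldots,x_{n-1})$, $Y=(y_1,\ldots,y_{n-1})$, $x_n$, and $y_1,\ldots,y_{n-2}$: (a) $\rho(\tilde\alpha(X))\circ\mu=\mu\circ\rho(X)$; (b) $\rho(\tilde\alpha(X))\rho(Y)-\varepsilon(X,Y)\rho(\tilde\alpha(Y))\rho(X)=\sum_{i=1}^{n-1}\varepsilon(X,y_1+\dots+y_{i-1})\rho(\alpha(y_1),\ldots,\alpha(y_{i-1}),\mathrm{ad}_X(y_i),\alpha(y_{i+1}),\ldots,\alpha(y_{n-1}))\circ\mu$;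 (c) $\rho([x_1,\ldots,x_n],\alpha(y_1),\ldots,\alpha(y_{n-2}))\circ\mu=\sum_{i=1}^n(-1)^{n-i}\varepsilon(x_i,x_{i+1}+\dots+x_n)\rho(\alpha(x_1),\ldots,\widehat{x_i},\ldots,\alpha(x_n))\circ\rho(x_i,y_1,\ldots,y_{n-2})$. A representation $(M,\rho)$ of an $n$-Lie color algebra is the case $\alpha=\mathrm{id}_{\mathfrak{g}}$, $\mu=\mathrm{id}_M$. *)

(* Defs.v *)
From HB Require Import structures.
From mathcomp Require Import all_boot all_order all_algebra.
Set Implicit Arguments. Unset Strict Implicit. Unset Printing Implicit Defensive.
Import Order.TTheory GRing.Theory Num.Theory.
Local Open Scope ring_scope.

Section ColorDefs.
Variables (K : fieldType) (G : zmodType).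

Definition char0 := [pchar K] =i pred0.

Definition bichar (eps : G -> G -> K) :=
  [/\ forall a b, eps a b != 0,
      forall a b, eps a b * eps b a = 1,
      forall a b c, eps a (b + c) = eps a b * eps a c &
      forall a b c, eps (a + b) c = eps a c * eps b c].

(* G-graded vector space: V = (+)_a V_a, where hom a is the subspace V_a *)
Definition graded (V : lmodType K) (hom : G -> V -> Prop) :=
  [/\ forall a, hom a 0,
      forall a (k : K) u v, hom a u -> hom a v -> hom a (k *: u + v),
      forall v : V, exists (s : seq G) (f : G -> V),
          (forall a, hom a (f a)) /\ v = \sum_(a <- s) f a &
      forall (s : seq G) (f : G -> V), uniq s -> (forall a, hom a (f a)) ->
          \sum_(a <- s) f a = 0 -> forall a, a \in s -> f a = 0].

Definition is_lin (U V : lmodType K) (f : U -> V) :=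
  forall (k : K) u v, f (k *: u + v) = k *: f u + f v.

Definition deg0 (U V : lmodType K) (homU : G -> U -> Prop) (homV : G -> V -> Prop)
  (f : U -> V) := forall a u, homU a u -> homV a (f u).

Definition upd (V : Type) k (x : {ffun 'I_k -> V}) (i : 'I_k) (v : V) : {ffun 'I_k -> V} :=
  [ffun j => if j == i then v else x j].
Definition swp (V : Type) k (x : {ffun 'I_k -> V}) (i j : 'I_k) : {ffun 'I_k -> V} :=
  [ffun l => if l == i then x j else if l == j then x i else x l].
Definition fmap (V : Type) k (f : V -> V) (x : {ffun 'I_k -> V}) : {ffun 'I_k -> V} :=
  [ffun j => f (x j)].
Definition snoc (V : Type) k (x : {ffun 'I_k -> V}) (z : V) : {ffun 'I_k.+1 -> V} :=
  [ffun j => match unlift ord_max j with Some l => x l | None => z end].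
Definition cons0 (V : Type) k (z : V) (y : {ffun 'I_k -> V}) : {ffun 'I_k.+1 -> V} :=
  [ffun j => match unlift ord0 j with Some l => y l | None => z end].
Definition omit (V : Type) k (x : {ffun 'I_k.+1 -> V}) (i : 'I_k.+1) : {ffun 'I_k -> V} :=
  [ffun l => x (lift i l)].

Definition homt (V : Type) k (hom : G -> V -> Prop) (d : 'I_k -> G) (x : {ffun 'I_k -> V}) :=
  forall i, hom (d i) (x i).

Definition multilin (V W : lmodType K) k (f : {ffun 'I_k -> V} -> W) :=
  forall x i (a : K) u v, f (upd x i (a *: u + v)) = a *: f (upd x i u) + f (upd x i v).

(* n-Hom-Lie color algebra, n = m.+2 *)
Definition nHomLieColor (g : lmodType K) (hom : G -> g -> Prop) (m : nat)
  (br : {ffun 'I_m.+2 -> g} -> g) (eps : G -> G -> K) (alpha : g -> g) :=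
  (graded hom) /\
  (bichar eps) /\
  (multilin br) /\
  (forall d x, homt hom d x -> hom (\sum_i d i) (br x)) /\
  (is_lin alpha /\ deg0 hom hom alpha) /\
  (
      forall d x (i j : 'I_m.+2), homt hom d x -> val j = (val i).+1 ->
        br x = - eps (d i) (d j) *: br (swp x i j)) /\
  (
      forall (dx : 'I_m.+1 -> G) (x : {ffun 'I_m.+1 -> g}) (dy : 'I_m.+2 -> G)
             (y : {ffun 'I_m.+2 -> g}), homt hom dx x -> homt hom dy y ->
        br (snoc (fmap alpha x) (br y)) =
        \sum_(i < m.+2) eps (\sum_k dx k) (\sum_(j < m.+2 | (j < i)%N) dy j) *:
             br (upd (fmap alpha y) i (br (snoc x (y i))))).

Definition mult_hom (g : lmodType K) (m : nat)
  (br : {ffun 'I_m.+2 -> g} -> g) (alpha : g -> g) :=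
  forall x, alpha (br x) = br (fmap alpha x).

Definition nLieColor (g : lmodType K) (hom : G -> g -> Prop) (m : nat)
  (br : {ffun 'I_m.+2 -> g} -> g) (eps : G -> G -> K) :=
  nHomLieColor hom br eps id.

(* representation (M, rho, mu) of the n-Hom-Lie color algebra (g, br, eps, alpha);
   rho : /\^{n-1} g -> End(M) is given as an (n-1)-multilinear,
   eps-skew-symmetric map *)
Definition hrep (g : lmodType K) (hom : G -> g -> Prop) (m : nat)
  (br : {ffun 'I_m.+2 -> g} -> g) (eps : G -> G -> K) (alpha : g -> g)
  (M : lmodType K) (homM : G -> M -> Prop)
  (rho : {ffun 'I_m.+1 -> g} -> M -> M) (mu : M -> M) :=
  (graded homM) /\
  ((forall X, is_lin (rho X)) /\ (forall w, multilin (fun X => rho X w))) /\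
  (forall d X b w, homt hom d X -> homM b w -> homM (\sum_i d i + b) (rho X w)) /\
  (forall d X (i j : 'I_m.+1) w, homt hom d X -> val j = (val i).+1 ->
        rho X w = - eps (d i) (d j) *: rho (swp X i j) w) /\
  (is_lin mu /\ deg0 homM homM mu) /\
  (
      forall d X w, homt hom d X -> rho (fmap alpha X) (mu w) = mu (rho X w)) /\
  (
      forall dX X dY Y w, homt hom dX X -> homt hom dY Y ->
        rho (fmap alpha X) (rho Y w)
          - eps (\sum_k dX k) (\sum_k dY k) *: rho (fmap alpha Y) (rho X w) =
        \sum_(i < m.+1) eps (\sum_k dX k) (\sum_(j < m.+1 | (j < i)%N) dY j) *:
            rho (upd (fmap alpha Y) i (br (snoc X (Y i)))) (mu w)) /\
  (
      forall (dx : 'I_m.+2 -> G) (x : {ffun 'I_m.+2 -> g}) (dy : 'I_m -> G)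
             (y : {ffun 'I_m -> g}) w, homt hom dx x -> homt hom dy y ->
        rho (cons0 (br x) (fmap alpha y)) (mu w) =
        \sum_(i < m.+2) ((-1) ^+ (m.+1 - i) *
                          eps (dx i) (\sum_(j < m.+2 | (i < j)%N) dx j)) *:
            rho (fmap alpha (omit x i)) (rho (cons0 (x i) y) w)).

Definition rep (g : lmodType K) (hom : G -> g -> Prop) (m : nat)
  (br : {ffun 'I_m.+2 -> g} -> g) (eps : G -> G -> K)
  (M : lmodType K) (homM : G -> M -> Prop) (rho : {ffun 'I_m.+1 -> g} -> M -> M) :=
  hrep hom br eps id homM rho id.

End ColorDefs.

(* Main.v *)
Require Import Defs.
From HB Require Import structures.
From mathcomp Require Import all_boot all_order all_algebra.
Import Order.TTheory GRing.Theory Num.Theory.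
Local Open Scope ring_scope.

Section Aux.
Set Implicit Arguments.
Variables (K : fieldType).

Lemma lin0 (U V : lmodType K) (f : U -> V) : is_lin f -> f 0 = 0.
Proof.
move=> H; have h := H 1 0 0.
rewrite scaler0 add0r scale1r in h.
have : f 0 + 0 = f 0 + f 0 by rewrite addr0 -h.
by move/addrI.
Qed.

Lemma linZ (U V : lmodType K) (f : U -> V) : is_lin f -> forall k u, f (k *: u) = k *: f u.
Proof. by move=> H k u; have := H k u 0; rewrite !addr0 (lin0 H) addr0. Qed.

Lemma linD (U V : lmodType K) (f : U -> V) : is_lin f -> forall u v, f (u + v) = f u + f v.
Proof. by move=> H u v; have := H 1 u v; rewrite !scale1r. Qed.

Lemma linN (U V : lmodType K) (f : U -> V) : is_lin f -> forall u, f (- u) = - f u.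
Proof. by move=> H u; rewrite -scaleN1r (linZ H) scaleN1r. Qed.

Lemma linB (U V : lmodType K) (f : U -> V) : is_lin f -> forall u v, f (u - v) = f u - f v.
Proof. by move=> H u v; rewrite (linD H) (linN H). Qed.

Lemma linS (U V : lmodType K) (f : U -> V) : is_lin f ->
  forall n (P : pred 'I_n) (F : 'I_n -> U), f (\sum_(i < n | P i) F i) = \sum_(i < n | P i) f (F i).
Proof. by move=> H n P F; apply: (big_morph f (linD H) (lin0 H)). Qed.

Lemma fmap_id (V : Type) k (x : {ffun 'I_k -> V}) : fmap id x = x.
Proof. by apply/ffunP => i; rewrite ffunE. Qed.

Lemma snoc_fmap (V : Type) k (f : V -> V) (x : {ffun 'I_k -> V}) z :
  snoc (fmap f x) (f z) = fmap f (snoc x z).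
Proof. by apply/ffunP => i; rewrite !ffunE; case: unliftP => [j|] _ //; rewrite ffunE. Qed.

Lemma cons0_fmap (V : Type) k (f : V -> V) (y : {ffun 'I_k -> V}) z :
  cons0 (f z) (fmap f y) = fmap f (cons0 z y).
Proof. by apply/ffunP => i; rewrite !ffunE; case: unliftP => [j|] _ //; rewrite ffunE. Qed.

Lemma upd_fmap (V : Type) k (f : V -> V) (y : {ffun 'I_k -> V}) i z :
  upd (fmap f y) i (f z) = fmap f (upd y i z).
Proof. by apply/ffunP => j; rewrite !ffunE; case: (j == i) => //; rewrite ffunE. Qed.

Lemma swp_fmap (V : Type) k (f : V -> V) (y : {ffun 'I_k -> V}) i j :
  swp (fmap f y) i j = fmap f (swp y i j).
Proof. by apply/ffunP => l; rewrite !ffunE; case: (l == i); case: (l == j); rewrite ?ffunE. Qed.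
End Aux.

(* n = m.+2 *)
Theorem proposition3p14 (K : fieldType) (G : zmodType) (m : nat)
  (g : lmodType K) (hom : G -> g -> Prop) (br : {ffun 'I_m.+2 -> g} -> g)
  (eps : G -> G -> K) (M : lmodType K) (homM : G -> M -> Prop)
  (rho : {ffun 'I_m.+1 -> g} -> M -> M) (alpha : g -> g) (mu : M -> M) :
  char0 K ->
  nLieColor hom br eps ->
  rep hom br eps homM rho ->
  is_lin alpha -> deg0 hom hom alpha -> mult_hom br alpha ->
  is_lin mu -> deg0 homM homM mu ->
  (forall X w, rho (fmap alpha X) (mu w) = mu (rho X w)) ->
  [/\ nHomLieColor hom (fun x => alpha (br x)) eps alpha,
      mult_hom (fun x => alpha (br x)) alpha &
      hrep hom (fun x => alpha (br x)) eps alpha homM (fun X w => mu (rho X w)) mu].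
Proof.
move=> _ hL hR la da mh lm dm hA.
case: hL => [gr [bc [ml [dg [_ [sk jac]]]]]].
case: hR => [grM [[linrho mlrho] [dgM [skM [_ [_ [rb rc]]]]]]].
split.
- split=> //; split=> //; split.
  + by move=> x i a u v /=; rewrite ml (linD la) (linZ la).
  split.
  + by move=> d x hx; apply: da; apply: dg.
  split=> //; split.
  + by move=> d x i j hx hij; rewrite (sk d x i j hx hij) (linZ la).
  move=> dx x dy y hx hy.
  rewrite snoc_fmap -mh.
  under eq_bigr => i _ do rewrite upd_fmap -mh.
  have := jac dx x dy y hx hy; rewrite !fmap_id => ->.
  rewrite (linS la) (linS la); apply: eq_bigr => i _.
  by rewrite !(linZ la).
- by move=> x; rewrite mh.
- split=> //; split.
  + split.
    * by move=> X k u v; rewrite linrho lm.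
    * by move=> w X i a u v /=; rewrite mlrho lm.
  split.
  + by move=> d X b w hX hw; apply: dm; apply: dgM.
  split.
  + by move=> d X i j w hX hij; rewrite (skM d X i j w hX hij) (linZ lm).
  split => //.
  split.
  + by move=> d X w _; rewrite hA.
  split.
  + move=> dX X dY Y w hX hY.
    rewrite !hA -(linZ lm) -(linB lm) -(linZ lm) -(linB lm).
    have := rb dX X dY Y w hX hY; rewrite !fmap_id => ->.
    rewrite (linS lm) (linS lm); apply: eq_bigr => i _.
    by rewrite !(linZ lm) upd_fmap hA.
  move=> dx x dy y w hx hy.
  rewrite cons0_fmap hA.
  have := rc dx x dy y w hx hy; rewrite !fmap_id => ->.
  rewrite (linS lm) (linS lm); apply: eq_bigr => i _.
  by rewrite hA !(linZ lm) fmap_id.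
Qed.
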